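(* Let $C\subseteq\mathbb F_2^n$ be a binary linear code all of whose nonzero words have Hamming weight at least $4$. Let $(e_1,\dots,e_n)$ be an orthonormal basis of a Euclidean space $E$ and let $\Lambda_C$ be the lattice generated by $\mathbb Z^n=\bigoplus_i\mathbb Z e_i$ together with the vectors $\tfrac12\sum_i x_ie_i$, where $x\in\{0,1\}^n$ runs through the representatives of the words of $C$. Let $w_4$ be the number of words of $C$ of weight $4$, and let $t$ be the number of $2$-element subsets $\{i,j\}\subseteq\{1,\dots,n\}$ such that $i$ and $j$ do not both lie in the support of a single weight-$4$ word of $C$. Then $$s(\Lambda_C)=n+8w_4\quad\text{and}\quad \operatorname{perf}(\Lambda_C)=\frac{n(n+1)}2-t.$$
   Context: For a lattice $\Lambda$, $\min\Lambda=\min_{x\in\Lambda\setminus\{0\}}x\cdot x$, $S(\Lambda)$ is the set of vectors attaining the minimum, and $s(\Lambda)=|S(\Lambda)|/2$. Perfection rank: let $\mathcal S^n$ be the space of real symmetric $n\times n$ matrices and $\mathcal R=\{G\in\mathcal S^n: x^tGx\ge 1\ \forall x\in\mathbb Z^n\setminus\{0\}\}$ the Ryshkov polyhedron (a locally finite polyhedron). If a lattice has minimum $1$ and $G$ is the Gram matrix of one of its bases, $G$ lies in the relative interior of a face of $\mathcal R$ of some dimension $k$ (independent of the basis); the perfection rank is $\operatorname{perf}(\Lambda)=\dim\mathcal S^n-k=\frac{n(n+1)}2-k$ (equivalently, the dimension of the span of $\{xx^t\}$ over the minimal vectors $x$ in coordinates). Perfection rank is invariant under scaling. *)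

(* Defs.v *)
From HB Require Import structures.
From mathcomp Require Import all_boot all_order all_algebra.
From mathcomp Require Import reals.
Set Implicit Arguments. Unset Strict Implicit. Unset Printing Implicit Defensive.
Import Order.TTheory GRing.Theory Num.Theory.
Local Open Scope ring_scope.

Definition wt (n : nat) (c : 'rV['F_2]_n) : nat := #|[set i : 'I_n | c 0 i != 0]|.

Definition lift01 (R : realType) (n : nat) (c : 'rV['F_2]_n) : 'rV[R]_n :=
  \row_i (if c 0 i == 0 then 0 else 1).

(* Euclidean inner product w.r.t. the orthonormal basis e_1..e_n (= standard basis). *)
Definition dot (R : realType) (n : nat) (u v : 'rV[R]_n) : R := (u *m v^T) 0 0.

Definition gensC (R : realType) (n : nat) (C : {vspace 'rV['F_2]_n})
  (v : 'rV[R]_n) : Prop :=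
  (exists i : 'I_n, v = delta_mx 0 i) \/
  (exists c : 'rV['F_2]_n, c \in C /\ v = 2^-1 *: lift01 R c).

Definition in_generated (R : realType) (n : nat) (S : 'rV[R]_n -> Prop)
  (v : 'rV[R]_n) : Prop :=
  forall P : 'rV[R]_n -> Prop,
    P 0 -> (forall x y, P x -> P y -> P (x - y)) -> (forall s, S s -> P s) -> P v.

Definition LambdaC (R : realType) (n : nat) (C : {vspace 'rV['F_2]_n}) :=
  in_generated (@gensC R n C).

Definition minimal_vec (R : realType) (n : nat) (L : 'rV[R]_n -> Prop)
  (v : 'rV[R]_n) : Prop :=
  L v /\ v != 0 /\ forall w, L w -> w != 0 -> dot v v <= dot w w.

Definition w4 (n : nat) (C : {vspace 'rV['F_2]_n}) : nat :=
  #|[set c : 'rV['F_2]_n | (c \in C) && (wt c == 4)%N]|.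

Definition tC (n : nat) (C : {vspace 'rV['F_2]_n}) : nat :=
  #|[set p : 'I_n * 'I_n | (p.1 < p.2)%N &&
      ~~ [exists c : 'rV['F_2]_n, [&& c \in C, wt c == 4%N, c 0 p.1 != 0 & c 0 p.2 != 0]]]|.

(* Perfection rank computed from a list enumerating the minimal vectors:
   dimension of the span of the rank-one matrices x^T x (x a minimal vector,
   in the orthonormal coordinates). *)
Definition perf_of (R : realType) (n : nat) (S : seq 'rV[R]_n) : nat :=
  \dim <<[seq (x^T *m x : 'M[R]_n) | x <- S]>>%VS.

(* Main.v *)
Require Import Defs.
From HB Require Import structures.
From mathcomp Require Import all_boot all_order all_algebra.
From mathcomp Require Import reals zify ring lra.
Import Order.TTheory GRing.Theory Num.Theory.
Set Implicit Arguments. Unset Strict Implicit. Unset Printing Implicit Defensive.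
Local Open Scope ring_scope.

Lemma F2cases (x : 'F_2) : x = 0 \/ x = 1.
Proof. case: x => [[|[|m]] Hm]; [left|right|]; try by apply/val_inj. by []. Qed.

Lemma F2_oppr (x : 'F_2) : - x = x.
Proof. by case: (F2cases x) => ->; rewrite ?oppr0 //; apply/val_inj. Qed.

Lemma F2_nat m : (m%:R : 'F_2) = (odd m)%:R.
Proof.
elim: m => [|m IH] //. rewrite mulrS IH /=.
by case: (odd m); apply/val_inj.
Qed.

Lemma intrF2 (z : int) : (z%:~R : 'F_2) = (odd (absz z))%:R.
Proof.
case: z => m; first by rewrite -pmulrn [LHS]F2_nat.
by rewrite NegzE mulrNz F2_oppr -pmulrn [LHS]F2_nat.
Qed.

Lemma F2b_eq0 (b : bool) : ((b%:R : 'F_2) == 0) = ~~ b.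
Proof. by case: b. Qed.

Lemma card_setE (T : finType) (P : pred T) : #|[set i | P i]| = (\sum_i (P i : nat))%N.
Proof.
rewrite -sum1_card big_mkcond /=; apply: eq_bigr => i _; rewrite inE.
by case: (P i).
Qed.

Lemma dotE (R : realType) n (u v : 'rV[R]_n) : dot u v = \sum_i u 0 i * v 0 i.
Proof. by rewrite /dot mxE; apply: eq_bigr => i _; rewrite mxE. Qed.

Lemma dot_half (R : realType) n (k : 'I_n -> int) :
  dot (\row_i ((k i)%:~R / 2 : R)) (\row_i ((k i)%:~R / 2)) =
  (\sum_i (absz (k i) ^ 2)%N)%:R / 4.
Proof.
rewrite dotE natr_sum mulr_suml; apply: eq_bigr => i _; rewrite !mxE.
by rewrite natrX natr_absz intr_norm real_normK ?num_real //; field.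
Qed.
Definition Pk (R : realType) n (C : {vspace 'rV['F_2]_n}) (v : 'rV[R]_n) : Prop :=
  exists k : 'I_n -> int, v = \row_i ((k i)%:~R / 2) /\
    (\row_i ((k i)%:~R : 'F_2)) \in C.

Lemma lattice_Pk (R : realType) n (C : {vspace 'rV['F_2]_n}) (v : 'rV[R]_n) :
  @LambdaC R n C v -> Pk C v.
Proof.
move=> H; apply: H.
- exists (fun _ => 0); split; first by apply/rowP => i; rewrite !mxE mul0r.
  by rewrite (_ : \row_i _ = 0) ?mem0v //; apply/rowP => i; rewrite !mxE.
- move=> x y [k [-> hk]] [l [-> hl]]; exists (fun i => k i - l i); split.
    by apply/rowP => i; rewrite !mxE intrB mulrBl.
  rewrite (_ : \row_i _ = \row_i ((k i)%:~R : 'F_2) - \row_i ((l i)%:~R)).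
    by rewrite memvB.
  by apply/rowP => i; rewrite !mxE intrB.
- move=> s [[j ->]|[c [hc ->]]].
  + exists (fun i => if i == j then 2 else 0); split.
      apply/rowP => i; rewrite !mxE eqxx /=; case: (i == j) => /=.
        by rewrite divff // pnatr_eq0.
      by rewrite mul0r.
    rewrite (_ : \row_i _ = 0) ?mem0v //; apply/rowP => i; rewrite !mxE.
    by case: (i == j); rewrite intrF2.
  + exists (fun i => if c 0 i == 0 then 0 else 1); split.
      by apply/rowP => i; rewrite /lift01 !mxE mulrC; case: (c 0 i == 0).
    rewrite (_ : \row_i _ = c) //; apply/rowP => i; rewrite !mxE.
    by case: (F2cases (c 0 i)) => ->.
Qed.

Definition shapeA n (k : 'I_n -> int) :=
  exists i, absz (k i) = 2%N /\ forall j, j != i -> k j = 0.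
Definition shapeB n (k : 'I_n -> int) :=
  wt (\row_i ((k i)%:~R : 'F_2)) = 4%N /\ forall i, (absz (k i) <= 1)%N.

Lemma wt_rowk n (k : 'I_n -> int) :
  wt (\row_i ((k i)%:~R : 'F_2)) = #|[set i | odd (absz (k i))]|.
Proof.
by apply: eq_card => i; rewrite !inE mxE intrF2 F2b_eq0 negbK.
Qed.

Lemma sq_class n (C : {vspace 'rV['F_2]_n})
  (hC : forall c : 'rV['F_2]_n, c \in C -> c != 0 -> (4 <= wt c)%N)
  (k : 'I_n -> int) (hk : \row_i ((k i)%:~R : 'F_2) \in C)
  (nz : exists i, k i != 0) :
  (4 <= \sum_i (absz (k i)) ^ 2)%N /\
  ((\sum_i (absz (k i)) ^ 2 <= 4)%N -> shapeA k \/ shapeB k).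
Proof.
have hwt := wt_rowk k.
case: (boolP [exists i, odd (absz (k i))]) => [/existsP [j hj] | /existsPn hno].
- have cnz : \row_i ((k i)%:~R : 'F_2) != 0.
    apply/eqP => /rowP /(_ j); rewrite !mxE intrF2 hj => /eqP; by [].
  have w4 := hC _ hk cnz.
  have hge : forall i, (odd (absz (k i)) <= absz (k i) ^ 2)%N.
    move=> i; case: (boolP (odd (absz (k i)))) => h //.
    have : (0 < absz (k i))%N by move: h; case: (absz (k i)).
    move=> h0; rewrite /=; nia.
  have hs : (wt (\row_i ((k i)%:~R : 'F_2)) <= \sum_i (absz (k i)) ^ 2)%N.
    by rewrite hwt card_setE; apply: leq_sum => i _.
  split; first exact: leq_trans w4 hs.
  move=> hle; right.
  have hsplit : (\sum_i (absz (k i)) ^ 2 = \sum_i (odd (absz (k i)) : nat)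
        + \sum_i (absz (k i) ^ 2 - odd (absz (k i))))%N.
    by rewrite -big_split /=; apply: eq_bigr => i _; rewrite subnKC.
  have hw : wt (\row_i ((k i)%:~R : 'F_2)) = (\sum_i (odd (absz (k i)) : nat))%N.
    by rewrite hwt card_setE.
  have h0 : (\sum_i (absz (k i) ^ 2 - odd (absz (k i))) == 0)%N.
    apply/eqP; move: hsplit hle w4; rewrite hw. lia.
  split; first by move: hsplit hle w4; rewrite hw; lia.
  move=> i; move: h0; rewrite sum_nat_eq0 => /forallP /(_ i) /= /eqP.
  have : (odd (absz (k i)) <= 1)%N by case: odd.
  move=> h1 h2; nia.
- have [j hj] := nz.
  have hmj : (2 <= absz (k j))%N.
    have := hno j; rewrite -absz_eq0 in hj; move: hj.
    by case: (absz (k j)) => [|[|]].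
  have hsum : (\sum_i (absz (k i)) ^ 2 = absz (k j) ^ 2 +
              \sum_(i | i != j) (absz (k i)) ^ 2)%N by rewrite (bigD1 j).
  split; first by rewrite hsum; nia.
  move=> hle; left; exists j.
  have h0 : (\sum_(i | i != j) (absz (k i)) ^ 2 == 0)%N by apply/eqP; nia.
  split; first by nia.
  move=> i hij; move: h0; rewrite sum_nat_eq0 => /forallP /(_ i).
  rewrite hij /= expn_eq0 absz_eq0 andbT => /eqP //.
Qed.

Definition ki n (f : {ffun 'I_n -> 'I_5}) (i : 'I_n) : int := (f i)%:Z - 2.
Definition vecf (R : realType) n (f : {ffun 'I_n -> 'I_5}) : 'rV[R]_n :=
  \row_i ((ki f i)%:~R / 2).
Definition parf n (f : {ffun 'I_n -> 'I_5}) : 'rV['F_2]_n :=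
  \row_i ((ki f i)%:~R : 'F_2).
Definition goodA n (f : {ffun 'I_n -> 'I_5}) :=
  [exists i, (absz (ki f i) == 2%N) && [forall j, (j != i) ==> (ki f j == 0)]].
Definition goodB n (C : {vspace 'rV['F_2]_n}) (f : {ffun 'I_n -> 'I_5}) :=
  [&& parf f \in C, wt (parf f) == 4%N & [forall i, (absz (ki f i) <= 1)%N]].
Definition goodS n (C : {vspace 'rV['F_2]_n}) :=
  [set f | goodA f || goodB C f].
Definition Smin (R : realType) n (C : {vspace 'rV['F_2]_n}) :=
  [seq vecf R f | f <- enum (goodS C)].

Lemma ki_bound n (f : {ffun 'I_n -> 'I_5}) i : (-2 <= ki f i <= 2).
Proof. rewrite /ki; have := ltn_ord (f i); lia. Qed.

Lemma vecf_inj (R : realType) n : injective (@vecf R n).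
Proof.
move=> f g /rowP H; apply/ffunP => i; have := H i; rewrite !mxE.
move/(mulIf _) => /(_ (lt0r_neq0 _)).
have h2 : (0 : R) < 2^-1 by rewrite invr_gt0 ltr0n.
move=> /(_ h2) /intr_inj; rewrite /ki => h; apply/val_inj => /=; lia.
Qed.

Lemma good_sum n (C : {vspace 'rV['F_2]_n}) f : f \in goodS C ->
  (\sum_i absz (ki f i) ^ 2 = 4)%N.
Proof.
rewrite inE => /orP [/existsP [i /andP [/eqP h1 /forallP h2]] | /and3P [_ /eqP hw /forallP hb]].
- rewrite (bigD1 i) //= h1 big1 // => j hj; have := h2 j; rewrite hj /= => /eqP ->.
  by [].
- rewrite -hw /parf wt_rowk card_setE; apply: eq_bigr => i _.
  by move: (hb i); case: (absz (ki f i)) => [|[|]].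
Qed.

Lemma L_sub (R : realType) n (C : {vspace 'rV['F_2]_n}) x y :
  @LambdaC R n C x -> LambdaC C y -> LambdaC C (x - y).
Proof. move=> hx hy P h0 hs hg; exact: hs _ _ (hx P h0 hs hg) (hy P h0 hs hg). Qed.
Lemma L_0 (R : realType) n (C : {vspace 'rV['F_2]_n}) : @LambdaC R n C 0.
Proof. by move=> P h0 hs hg. Qed.
Lemma L_gen (R : realType) n (C : {vspace 'rV['F_2]_n}) x :
  gensC C x -> @LambdaC R n C x.
Proof. by move=> hx P h0 hs hg; apply: hg. Qed.
Lemma L_add (R : realType) n (C : {vspace 'rV['F_2]_n}) x y :
  @LambdaC R n C x -> LambdaC C y -> LambdaC C (x + y).
Proof.
move=> hx hy; have -> : x + y = x - (0 - y) by rewrite sub0r opprK.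
by apply: L_sub => //; apply: L_sub => //; apply: L_0.
Qed.
Lemma L_sum (R : realType) n (C : {vspace 'rV['F_2]_n}) (A : {set 'I_n}) F :
  (forall i, @LambdaC R n C (F i)) -> LambdaC C (\sum_(i in A) F i).
Proof.
move=> h; apply: (big_ind (@LambdaC R n C)); [exact: L_0 | exact: L_add | by move=> i _; apply: h].
Qed.

Lemma sum_ind (R : realType) n (A : {set 'I_n}) (j : 'I_n) :
  \sum_(l in A) ((j == l)%:R : R) = (j \in A)%:R.
Proof.
rewrite big_mkcond (bigD1 j) //= big1 ?addr0 => [|l hl].
  by rewrite eqxx; case: (j \in A).
by rewrite eq_sym (negbTE hl); case: (l \in A).
Qed.

Lemma two_half (R : realType) : ((2 : int)%:~R / 2 : R) = 1.
Proof. by rewrite -[(2 : int)%:~R]/(2%:R : R) divff // pnatr_eq0. Qed.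

Lemma good_lattice (R : realType) n (C : {vspace 'rV['F_2]_n}) f :
  f \in goodS C -> @LambdaC R n C (vecf R f).
Proof.
rewrite inE => /orP [/existsP [i /andP [/eqP h1 /forallP h2]] | /and3P [hc /eqP hw /forallP hb]].
- have hz : forall j, j != i -> ki f j = 0 by move=> j hj; have := h2 j; rewrite hj => /eqP.
  have [hp|hm] : ki f i = 2 \/ ki f i = -2 by lia.
  + rewrite (_ : vecf R f = delta_mx 0 i); first by apply: L_gen; left; exists i.
    apply/rowP => j; rewrite !mxE /=; case: (eqVneq j i) => [->|hj].
      by rewrite hp two_half.
    by rewrite hz // mul0r.
  + rewrite (_ : vecf R f = 0 - delta_mx 0 i).
      by apply: L_sub; [apply: L_0 | apply: L_gen; left; exists i].
    apply/rowP => j; rewrite !mxE /= sub0r; case: (eqVneq j i) => [->|hj].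
      by rewrite hm mulrNz mulNr two_half.
    by rewrite hz // mul0r oppr0.
- rewrite (_ : vecf R f = 2^-1 *: lift01 R (parf f) - \sum_(j in [set j | ki f j == -1]) delta_mx 0 j).
    apply: L_sub; first by apply: L_gen; right; exists (parf f).
    by apply: L_sum => j; apply: L_gen; left; exists j.
  apply/rowP => j; rewrite !mxE summxE.
  under eq_bigr do rewrite mxE /=.
  rewrite sum_ind inE intrF2 F2b_eq0.
  have [->|[->|->]] : ki f j = -1 \/ ki f j = 0 \/ ki f j = 1.
    by have := hb j; lia.
  + by rewrite /= mulrNz /=; field.
  + by rewrite /=; field.
  + by rewrite /=; field.
Qed.

Definition hA n (p : 'I_n * bool) : {ffun 'I_n -> 'I_5} :=
  [ffun j => if j == p.1 then (if p.2 then ord_max else ord0) else inord 2].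

Lemma ki_hA n (p : 'I_n * bool) j :
  ki (hA p) j = if j == p.1 then (if p.2 then 2 else -2) else 0.
Proof.
rewrite /ki ffunE; case: (j == p.1); first by case: p.2.
by rewrite inordK.
Qed.

Lemma hA_good n (C : {vspace 'rV['F_2]_n}) p : hA p \in goodS C.
Proof.
rewrite inE; apply/orP; left; apply/existsP; exists p.1.
rewrite ki_hA eqxx; apply/andP; split; first by case: p.2.
by apply/forallP => j; apply/implyP => hj; rewrite ki_hA (negbTE hj).
Qed.

Lemma nz_k (R : realType) n (k : 'I_n -> int) :
  \row_i ((k i)%:~R / 2 : R) != 0 -> exists i, k i != 0.
Proof.
move=> h; case: (boolP [exists i, k i != 0]) => [/existsP //| /existsPn H].
move: h.
rewrite (_ : \row_i _ = 0) ?eqxx //; apply/rowP => i; rewrite !mxE.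
by have := H i; rewrite negbK => /eqP ->; rewrite mul0r.
Qed.

Lemma lattice_lb (R : realType) n (C : {vspace 'rV['F_2]_n})
  (hC : forall c : 'rV['F_2]_n, c \in C -> c != 0 -> (4 <= wt c)%N) w :
  @LambdaC R n C w -> w != 0 -> 1 <= dot w w.
Proof.
move=> /lattice_Pk [k [-> hk]] wnz.
have [h4 _] := sq_class hC hk (nz_k wnz).
rewrite dot_half; move: h4; rewrite -(ler_nat R) => h4; lra.
Qed.

Lemma dot_vecf_good (R : realType) n (C : {vspace 'rV['F_2]_n}) f :
  f \in goodS C -> dot (vecf R f) (vecf R f) = 1.
Proof. by move=> hf; rewrite /vecf dot_half (good_sum hf); field. Qed.

Lemma minimal_iff (R : realType) n (C : {vspace 'rV['F_2]_n})
  (hC : forall c : 'rV['F_2]_n, c \in C -> c != 0 -> (4 <= wt c)%N) v :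
  v \in Smin R C <-> minimal_vec (@LambdaC R n C) v.
Proof.
split.
- move=> /mapP [f]; rewrite mem_enum => hf ->; split; first exact: good_lattice.
  split.
    apply/eqP => h0; have := dot_vecf_good R hf; rewrite h0 /dot mul0mx mxE => /eqP.
    by rewrite eq_sym oner_eq0.
  move=> w hw wnz; rewrite (dot_vecf_good R hf). exact: (lattice_lb hC hw wnz).
- move=> [hL [hnz hmin]].
  have [k [hv hk]] := lattice_Pk hL.
  have hnzk : exists i, k i != 0 by apply: (@nz_k R); rewrite -hv.
  have [i0 _] := hnzk.
  have hAg : hA (i0, true) \in goodS C := hA_good C (i0, true).
  have hle := hmin _ (good_lattice (R:=R) hAg).
  rewrite (dot_vecf_good R hAg) hv dot_half in hle.
  have hle4 : (\sum_i absz (k i) ^ 2 <= 4)%N.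
    rewrite -(ler_nat R); move: hle.
    have h1 : vecf R (hA (i0, true)) != 0.
      apply/eqP => h0; have := dot_vecf_good R hAg; rewrite h0 /dot mul0mx mxE => /eqP.
      by rewrite eq_sym oner_eq0.
    move=> /(_ h1) h2; rewrite natr_sum; move: h2; rewrite natr_sum; lra.
  have [_ hcl] := sq_class hC hk hnzk.
  have hbd : forall i, (-2 <= k i <= 2).
    by move=> i; case: (hcl hle4) => [[j [hj hz]] | [_ hb]];
      [case: (eqVneq i j) => [->|/hz ->] //; lia | have := hb i; lia].
  pose f : {ffun 'I_n -> 'I_5} := [ffun i => inord (absz (k i + 2))].
  have hkf : forall i, ki f i = k i.
    move=> i; rewrite /ki ffunE inordK; have := hbd i; lia.
  have hvf : v = vecf R f by rewrite hv; apply/rowP => i; rewrite !mxE hkf.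
  have hpf : parf f = \row_i ((k i)%:~R : 'F_2).
    by apply/rowP => i; rewrite !mxE hkf.
  apply/mapP; exists f => //; rewrite mem_enum inE; apply/orP.
  case: (hcl hle4) => [[j [hj hz]] | [hw hb]].
  + left; apply/existsP; exists j; rewrite hkf hj eqxx /=.
    by apply/forallP => i; apply/implyP => /hz; rewrite hkf => ->.
  + right; rewrite /goodB hpf hk hw eqxx /=; apply/forallP => i; rewrite hkf; exact: hb.
Qed.


Lemma ki_inj n (f g : {ffun 'I_n -> 'I_5}) j : ki f j = ki g j -> f j = g j.
Proof. rewrite /ki => h; apply/val_inj => /=; lia. Qed.

Lemma hA_goodA n (p : 'I_n * bool) : goodA (hA p).
Proof.
apply/existsP; exists p.1.
rewrite ki_hA eqxx; apply/andP; split; first by case: p.2.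
by apply/forallP => j; apply/implyP => hj; rewrite ki_hA (negbTE hj).
Qed.

Lemma hA_inj n : injective (@hA n).
Proof.
move=> [i b] [i' b'] h.
have h1 := congr1 (fun f => ki f i) h; rewrite /= !ki_hA eqxx in h1.
case: (eqVneq i i') => [ei|ni]; last by move: h1; rewrite (negbTE ni); case: (b).
subst i'; congr pair; move: h1; rewrite eqxx; by case: (b); case: (b').
Qed.

Lemma cardA n : #|[set f : {ffun 'I_n -> 'I_5} | goodA f]| = (2 * n)%N.
Proof.
have -> : [set f : {ffun 'I_n -> 'I_5} | goodA f] = (@hA n) @: [set: 'I_n * bool].
  apply/setP => f; rewrite inE; apply/idP/imsetP.
  - move=> /existsP [i /andP [/eqP h1 /forallP h2]].
    exists (i, ki f i == 2); first by rewrite inE.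
    apply/ffunP => j; apply: ki_inj; rewrite ki_hA /=.
    case: (eqVneq j i) => [->|hj]; first by case: (eqVneq (ki f i) 2) => //; lia.
    by have := h2 j; rewrite hj => /eqP.
  - by move=> [p _ ->]; apply: hA_goodA.
rewrite card_imset; last exact: hA_inj.
by rewrite cardsT card_prod card_ord card_bool mulnC.
Qed.

Definition hB n (c : 'rV['F_2]_n) (N : {set 'I_n}) : {ffun 'I_n -> 'I_5} :=
  [ffun i => if c 0 i == 0 then inord 2 else if i \in N then inord 1 else inord 3].

Lemma ki_hB n (c : 'rV['F_2]_n) N i :
  ki (hB c N) i = if c 0 i == 0 then 0 else if i \in N then -1 else 1.
Proof.
by rewrite /ki ffunE; case: (c 0 i == 0); [|case: (i \in N)]; rewrite inordK.
Qed.

Lemma parf_hB n (c : 'rV['F_2]_n) N : parf (hB c N) = c.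
Proof.
apply/rowP => i; rewrite !mxE ki_hB intrF2.
by case: (F2cases (c 0 i)) => ->; [|case: (i \in N)].
Qed.

Lemma hB_goodB n (C : {vspace 'rV['F_2]_n}) c N :
  c \in C -> wt c = 4%N -> goodB C (hB c N).
Proof.
move=> hc hw; rewrite /goodB parf_hB hc hw eqxx /=; apply/forallP => i.
by rewrite ki_hB; case: (c 0 i == 0); [|case: (i \in N)].
Qed.

Definition supp n (c : 'rV['F_2]_n) := [set i | c 0 i != 0].

Lemma cardB n (C : {vspace 'rV['F_2]_n}) :
  #|[set f : {ffun 'I_n -> 'I_5} | goodB C f]| = (16 * w4 C)%N.
Proof.
rewrite -sum1_card (partition_big (@parf n) (mem [set c | (c \in C) && (wt c == 4%N)])).
  rewrite /w4 -sum1_card big_distrr /=; apply: eq_bigr => c.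
  rewrite inE => /andP [hc /eqP hw].
  rewrite muln1 sum1dep_card.
  have -> : [set x | (x \in [set f | goodB C f]) && (parf x == c)] =
      hB c @: powerset (supp c).
    apply/setP => f; rewrite !inE; apply/andP/imsetP.
    - move=> [/and3P [_ _ /forallP hb] /eqP hpc].
      exists [set i | ki f i == -1].
        rewrite inE; apply/subsetP => i; rewrite !inE => /eqP hi.
        by rewrite -hpc mxE hi intrF2.
      apply/ffunP => i; apply: ki_inj; rewrite ki_hB inE -hpc mxE intrF2.
      have [->|[->|->]] : ki f i = -1 \/ ki f i = 0 \/ ki f i = 1.
        by have := hb i; lia.
      + by [].
      + by [].
      + by [].
    - move=> [N _ ->]; split; first exact: hB_goodB.
      by rewrite parf_hB.
  rewrite card_in_imset ?card_powerset; first by move: hw; rewrite /supp /wt => ->.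
  move=> N N'; rewrite !inE => /subsetP hN /subsetP hN' h.
  apply/setP => i; have := congr1 (fun f => ki f i) h; rewrite /= !ki_hB.
  case: (boolP (c 0 i == 0)) => hci.
    have h1 : i \notin N by apply/negP => /hN; rewrite inE hci.
    have h2 : i \notin N' by apply/negP => /hN'; rewrite inE hci.
    by rewrite (negbTE h1) (negbTE h2).
  by case: (i \in N); case: (i \in N').
move=> f; rewrite inE => /and3P [hc hw _]; change (parf f \in [set c | (c \in C) && (wt c == 4%N)]); by rewrite inE hc hw.
Qed.


Lemma size_Smin (R : realType) n (C : {vspace 'rV['F_2]_n}) :
  size (Smin R C) = (2 * (n + 8 * w4 C))%N.
Proof.
rewrite size_map -cardE.
have -> : goodS C = [set f | goodA f] :|: [set f | goodB C f].
  by apply/setP => f; rewrite !inE.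
rewrite cardsU cardA cardB.
have -> : [set f | goodA f] :&: [set f | goodB C f] = set0.
  apply/setP => f; rewrite !inE; apply/negP.
  move=> /andP [/existsP [i /andP [/eqP h _]] /and3P [_ _ /forallP hb]].
  by have := hb i; rewrite h.
rewrite cards0 subn0; lia.
Qed.

Definition cov n (C : {vspace 'rV['F_2]_n}) (p : 'I_n * 'I_n) :=
  [exists c : 'rV['F_2]_n, [&& c \in C, wt c == 4%N, c 0 p.1 != 0 & c 0 p.2 != 0]].
Definition Dset n (C : {vspace 'rV['F_2]_n}) :=
  [set p : 'I_n * 'I_n | (p.1 <= p.2)%N && ((p.1 == p.2) || cov C p)].

Lemma sum_le m n : (\sum_(j < n) (m <= j : nat) = n - m)%N.
Proof.
elim: n => [|n IH]; first by rewrite big_ord0.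
rewrite big_ord_recr /= IH; case: (leqP m n) => h /=; lia.
Qed.

Lemma sum_tri n : (2 * \sum_(i < n) (n - i) = n * n.+1)%N.
Proof.
elim: n => [|n IH]; first by rewrite big_ord0.
rewrite big_ord_recl /=.
have -> : (\sum_(i < n) (n.+1 - bump 0 i) = \sum_(i < n) (n - i))%N.
  by apply: eq_bigr => i _; rewrite /bump /= add1n subSS.
rewrite mulnDr IH; lia.
Qed.

Lemma card_L n : (2 * #|[set p : 'I_n * 'I_n | (p.1 <= p.2)%N]| = n * n.+1)%N.
Proof.
rewrite card_setE -(pair_bigA _ (fun (i j : 'I_n) => ((i : nat) <= j : nat)%N)) /=.
rewrite -sum_tri; congr (2 * _)%N; apply: eq_bigr => i _.
by rewrite sum_le.
Qed.

Lemma card_D n (C : {vspace 'rV['F_2]_n}) :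
  #|Dset C| = ((n * n.+1) %/ 2 - tC C)%N.
Proof.
have hL := card_L n.
have := cardsID [set p : 'I_n * 'I_n | (p.1 == p.2) || cov C p]
                [set p : 'I_n * 'I_n | (p.1 <= p.2)%N].
have -> : [set p : 'I_n * 'I_n | (p.1 <= p.2)%N] :&:
    [set p | (p.1 == p.2) || cov C p] = Dset C by apply/setP => p; rewrite !inE.
have -> : [set p : 'I_n * 'I_n | (p.1 <= p.2)%N] :\:
    [set p | (p.1 == p.2) || cov C p] =
    [set p : 'I_n * 'I_n | (p.1 < p.2)%N && ~~ cov C p].
  apply/setP => p; rewrite !inE negb_or ltn_neqAle.
  by case: (p.1 <= p.2)%N; rewrite ?andbF ?andbT // andbC.
rewrite -[#|[set p : 'I_n * 'I_n | (p.1 < p.2)%N && ~~ cov C p]|]/(tC C).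
rewrite -hL mulKn //; lia.
Qed.


Definition gp (R : realType) n (p : 'I_n * 'I_n) : 'M[R]_n :=
  delta_mx p.1 p.2 + delta_mx p.2 p.1.
Definition Tseq (R : realType) n (C : {vspace 'rV['F_2]_n}) :=
  [seq gp R p | p <- enum (Dset C)].

Lemma gp_entry (R : realType) n (p : 'I_n * 'I_n) a b :
  gp R p a b = ((p == (a, b))%:R + (p == (b, a))%:R).
Proof.
case: p => x y; rewrite /gp !mxE /= !xpair_eqE.
by rewrite (eq_sym x a) (eq_sym y b) (eq_sym x b) (eq_sym y a) [(b == x) && _]andbC.
Qed.

Lemma sum_pair (R : realType) n (D : {set 'I_n * 'I_n}) (F : 'I_n * 'I_n -> R) q :
  \sum_(p in D) F p * (p == q)%:R = (q \in D)%:R * F q.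
Proof.
rewrite big_mkcond (bigD1 q) //= big1 ?addr0 => [|p hp].
  by rewrite eqxx mulr1; case: (q \in D); rewrite ?mul1r ?mul0r.
by rewrite (negbTE hp) mulr0; case: (p \in D).
Qed.

Lemma span_sym (R : realType) n (C : {vspace 'rV['F_2]_n}) (M : 'M[R]_n) :
  (forall a b, M a b = M b a) ->
  (forall a b : 'I_n, (a < b)%N -> ~~ cov C (a, b) -> M a b = 0) ->
  M \in <<Tseq R C>>%VS.
Proof.
move=> hs hz.
pose cf (p : 'I_n * 'I_n) := M p.1 p.2 / (1 + (p.1 == p.2)%:R).
have -> : M = \sum_(p in Dset C) cf p *: gp R p.
  apply/matrixP => a b; rewrite summxE.
  under eq_bigr do rewrite mxE gp_entry mulrDr.
  rewrite big_split /= !sum_pair !inE /= /cf /=.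
  case: (ltngtP a b) => hab.
  - have hba : (b <= a)%N = false by apply/negbTE; rewrite -ltnNge.
    have nab : (a == b) = false by apply/negbTE; apply/eqP => e; move: hab; rewrite e ltnn.
    have nba : (b == a) = false by rewrite eq_sym.
    rewrite nab nba /=; case: (boolP (cov C (a, b))) => hc /=.
      by rewrite mul0r mul1r !addr0 divr1.
    by rewrite !mul0r addr0 hz.
  - have hba : (a <= b)%N = false by apply/negbTE; rewrite -ltnNge.
    have nab : (a == b) = false by apply/negbTE; apply/eqP => e; move: hab; rewrite e ltnn.
    have nba : (b == a) = false by rewrite eq_sym.
    rewrite nab nba /= (hs b a); case: (boolP (cov C (b, a))) => hc /=.
      by rewrite mul0r mul1r !add0r addr0 divr1.
    by rewrite !mul0r addr0 -(hs b a) hz.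
  - have e : a = b by apply: val_inj.
    subst b; rewrite eqxx /=; by field.
apply: memv_suml => p hp; apply: memvZ; apply: memv_span.
by apply: map_f; rewrite mem_enum.
Qed.


Lemma gp_entry_D (R : realType) n (C : {vspace 'rV['F_2]_n}) p q :
  p \in Dset C -> q \in Dset C ->
  gp R p q.1 q.2 = (p == q)%:R * (1 + (q.1 == q.2)%:R).
Proof.
case: p => x y; case: q => u v; rewrite !inE /= => /andP [hp _] /andP [hq _].
rewrite gp_entry !xpair_eqE.
case: (eqVneq x u) => [<-|hxu]; case: (eqVneq y v) => [<-|hyv] /=.
- by rewrite eq_sym andbb mul1r.
- have -> : (x == v) && (y == x) = false.
    apply/negP => /andP [/eqP e1 /eqP e2]; move/eqP: hyv; apply; apply: val_inj.
    move/(congr1 val): e1; move/(congr1 val): e2 => /= e2 e1; lia.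
  by rewrite mul0r add0r.
- have -> : (x == y) && (y == u) = false.
    apply/negP => /andP [/eqP e1 /eqP e2]; move/eqP: hxu; apply; apply: val_inj.
    move/(congr1 val): e1; move/(congr1 val): e2 => /= e2 e1; lia.
  by rewrite mul0r add0r.
- have -> : (x == v) && (y == u) = false.
    apply/negP => /andP [/eqP e1 /eqP e2]; move/eqP: hxu; apply; apply: val_inj.
    move/(congr1 val): e1; move/(congr1 val): e2 => /= e2 e1; lia.
  by rewrite mul0r add0r.
Qed.

Lemma free_T (R : realType) n (C : {vspace 'rV['F_2]_n}) : free (Tseq R C).
Proof.
apply/(@freeP _ _ _ (in_tuple (Tseq R C))) => k hk i.
have hsz : size (Tseq R C) = size (enum (Dset C)) by rewrite size_map.
have p0 : 'I_n * 'I_n.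
  have : (0 < size (enum (Dset C)))%N by rewrite -hsz (leq_ltn_trans _ (ltn_ord i)).
  case: (enum (Dset C)) => [//|q _ _]; exact q.
have hnth : forall j : 'I_(size (Tseq R C)),
    (in_tuple (Tseq R C))`_j = gp R (nth p0 (enum (Dset C)) j).
  move=> j; rewrite /= (nth_map p0) //; rewrite -hsz; exact: ltn_ord.
have hin : forall j : 'I_(size (Tseq R C)), nth p0 (enum (Dset C)) j \in Dset C.
  move=> j; rewrite -mem_enum; apply: mem_nth; rewrite -hsz; exact: ltn_ord.
set q := nth p0 (enum (Dset C)) i.
have := congr1 (fun M : 'M[R]_n => M q.1 q.2) hk; rewrite /= summxE mxE.
under eq_bigr => j _ do rewrite mxE hnth (gp_entry_D R (hin j) (hin i)).
rewrite (bigD1 i) //= big1 ?addr0 => [|j hj].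
  rewrite eqxx mul1r => /eqP; rewrite mulf_eq0 => /orP [/eqP //|].
  by case: (q.1 == q.2) => /=; rewrite ?addr0 ?oner_eq0 // => /eqP; lra.
rewrite /q nth_uniq ?enum_uniq -?hsz ?ltn_ord //.
have -> : (nat_of_ord j == nat_of_ord i) = false by apply/negbTE.
by rewrite mul0r mulr0.
Qed.

Lemma dim_T (R : realType) n (C : {vspace 'rV['F_2]_n}) :
  \dim <<Tseq R C>> = #|Dset C|.
Proof. by move/eqP: (free_T R C) => ->; rewrite size_map -cardE. Qed.


Lemma outer_entry (R : realType) n (y : 'rV[R]_n) a b :
  (y^T *m y) a b = y 0 a * y 0 b.
Proof. by rewrite !mxE big_ord1 !mxE. Qed.

Lemma vecf_entry (R : realType) n (f : {ffun 'I_n -> 'I_5}) a :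
  vecf R f 0 a = (ki f a)%:~R / 2.
Proof. by rewrite mxE. Qed.

Lemma good_cov n (C : {vspace 'rV['F_2]_n}) f (a b : 'I_n) :
  f \in goodS C -> (a < b)%N -> ki f a != 0 -> ki f b != 0 -> cov C (a, b).
Proof.
rewrite inE => /orP [/existsP [i /andP [_ /forallP h2]] | /and3P [hc hw /forallP hb]].
- move=> hab ha hb; exfalso.
  have ea : a = i.
    by case: (eqVneq a i) => // hai; have := h2 a; rewrite hai /= => /eqP h; rewrite h eqxx in ha.
  have eb : b = i.
    by case: (eqVneq b i) => // hbi; have := h2 b; rewrite hbi /= => /eqP h; rewrite h eqxx in hb.
  by move: hab; rewrite ea eb ltnn.
- move=> _ ha hb'; apply/existsP; exists (parf f); rewrite hc hw /= !mxE !intrF2 /=.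
  have oa : odd (absz (ki f a)) by have := hb a; move: ha; rewrite -absz_eq0; case: (absz _) => [|[|]].
  have ob : odd (absz (ki f b)) by have := hb b; move: hb'; rewrite -absz_eq0; case: (absz _) => [|[|]].
  by rewrite oa ob.
Qed.

Definition S2 (R : realType) n (C : {vspace 'rV['F_2]_n}) :=
  [seq (x^T *m x : 'M[R]_n) | x <- Smin R C].

Lemma inS2 (R : realType) n (C : {vspace 'rV['F_2]_n}) f :
  f \in goodS C -> (vecf R f)^T *m vecf R f \in <<S2 R C>>%VS.
Proof.
move=> hf; apply: memv_span; apply: (map_f (fun x : 'rV[R]_n => x^T *m x)).
by apply: map_f; rewrite mem_enum.
Qed.

Lemma hB_entry (R : realType) n (c : 'rV['F_2]_n) N a :
  vecf R (hB c N) 0 a =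
  (if c 0 a == 0 then 0 else 1) * (if a \in N then -1 else 1) / 2.
Proof.
rewrite vecf_entry ki_hB; case: (c 0 a == 0); first by rewrite !mul0r.
by case: (a \in N); rewrite mul1r.
Qed.


Lemma kiR_hB (R : realType) n (c : 'rV['F_2]_n) N a :
  ((ki (hB c N) a)%:~R : R) =
  (if c 0 a == 0 then 0 else 1) * (if a \in N then -1 else 1).
Proof.
rewrite ki_hB; case: (c 0 a == 0); first by rewrite !mul0r.
by case: (a \in N); rewrite mul1r.
Qed.

Lemma hB_good n (C : {vspace 'rV['F_2]_n}) c N :
  c \in C -> wt c = 4%N -> hB c N \in goodS C.
Proof. by move=> hc hw; rewrite inE (hB_goodB N hc hw) orbT. Qed.

Lemma gp_in_S2 (R : realType) n (C : {vspace 'rV['F_2]_n}) p :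
  p \in Dset C -> gp R p \in <<S2 R C>>%VS.
Proof.
case: p => i j; rewrite inE /= => /andP [hle hor].
case: (eqVneq i j) => [<-|hij].
- have -> : gp R (i, i) = 2 *: ((vecf R (hA (i, true)))^T *m vecf R (hA (i, true))).
    apply/matrixP => a b; rewrite [RHS]mxE outer_entry !vecf_entry !ki_hA /gp /= !mxE.
    by case: (a == i); case: (b == i); rewrite /= ?two_half; field.
  by apply: memvZ; apply: inS2; exact: hA_good.
- move: hor; rewrite (negbTE hij) /= => /existsP [c /and4P [hc /eqP hw hci hcj]].
  pose M N := (vecf R (hB c N))^T *m vecf R (hB c N).
  have -> : gp R (i, j) = M set0 - M [set i] - M [set j] + M [set i; j].
  { apply/matrixP => a b; rewrite !mxE !big_ord1 !mxE !kiR_hB !inE /=.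
    have he : ((a == i) && (b == j)) || ((a == j) && (b == i)) ->
        (if c 0 a == 0 then 0 else 1) * (if c 0 b == 0 then 0 else 1) = 1 :> R.
      by case/orP => /andP [/eqP -> /eqP ->]; rewrite (negbTE hci) (negbTE hcj) mul1r.
    have ha : ~~ ((a == i) && (a == j)).
      by apply/andP => [[/eqP ea /eqP eb]]; move: hij; rewrite -ea -eb eqxx.
    have hb : ~~ ((b == i) && (b == j)).
      by apply/andP => [[/eqP ea /eqP eb]]; move: hij; rewrite -ea -eb eqxx.
    move: he ha hb.
    move: (if c 0 a == 0 then 0 else 1 : R) (if c 0 b == 0 then 0 else 1 : R) => ea eb.
    move: (a == i) (a == j) (b == i) (b == j) => [] [] [] [] //=.
    all: move=> h _ _; try have {}h := h isT; nra. }
  have hM : forall N, M N \in <<S2 R C>>%VS by move=> N; apply: inS2; apply: hB_good.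
  by rewrite memvD ?memvB ?hM.
Qed.


Lemma span_eq (R : realType) n (C : {vspace 'rV['F_2]_n}) :
  <<S2 R C>>%VS = <<Tseq R C>>%VS.
Proof.
apply/eqP; rewrite eqEsubv; apply/andP; split; apply/span_subvP => M.
- move=> /mapP [y /mapP [f hf ->] ->]; rewrite mem_enum in hf.
  apply: span_sym => [a b|a b hab hnc]; first by rewrite !outer_entry mulrC.
  apply/eqP; rewrite outer_entry !vecf_entry mulf_eq0; apply/negPn/negP.
  rewrite negb_or => /andP [ha hb]; move/negP: hnc; apply; apply: (good_cov hf hab).
    by apply/negP => /eqP e; move: ha; rewrite e mul0r eqxx.
  by apply/negP => /eqP e; move: hb; rewrite e mul0r eqxx.
- by move=> /mapP [p hp ->]; rewrite mem_enum in hp; apply: gp_in_S2.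
Qed.


Unset Implicit Arguments.

Theorem proposition7p2 (R : realType) (n : nat) (C : {vspace 'rV['F_2]_n})
  (hC : forall c : 'rV['F_2]_n, c \in C -> c != 0 -> (4 <= wt c)%N) :
  exists S : seq 'rV[R]_n,
    [/\ uniq S,
        (forall v, v \in S <-> minimal_vec (@LambdaC R n C) v),
        size S = (2 * (n + 8 * w4 C))%N
      & perf_of S = ((n * n.+1) %/ 2 - tC C)%N].
Proof.
exists (Smin R C); split.
- by rewrite map_inj_uniq ?enum_uniq //; apply: vecf_inj.
- by move=> v; apply: minimal_iff.
- exact: size_Smin.
- by rewrite /perf_of -/(S2 R C) span_eq dim_T card_D.
Qed.
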